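(* Let $(M,d)$ be a pointed metric space. The space $\mathrm{Lip}_0(M)$ has the $w^*$-LD2P if and only if $M$ has the 2-Lip-LTP.
   Context: $M$ has base point $0$; $\mathrm{Lip}_0(M)$ is the real Banach space of Lipschitz $f\colon M\to\mathbb R$ with $f(0)=0$, normed by the best Lipschitz constant, with unit ball $B_{\mathrm{Lip}_0(M)}$; it is the dual of the Lipschitz-free space $\mathcal F(M)$ (norm-closed span of the point evaluations $\delta_x$ in $\mathrm{Lip}_0(M)^*$). $\mathrm{Lip}_0(M)$ has the $w^*$-LD2P if every $w^*$-slice $\{f\in B_{\mathrm{Lip}_0(M)}: \mu(f)>1-\alpha\}$, $\mu\in\mathcal F(M)$, $\|\mu\|=1$, $\alpha>0$, has diameter $2$. $\widetilde M=\{(x,y)\in M\times M:x\ne y\}$, $f(m_{x,y})=(f(x)-f(y))/d(x,y)$, $\pi(A)=\{x\in M:\exists y,\ (x,y)\in A\text{ or }(y,x)\in A\}$. $A\subseteq\widetilde M$ is cyclically monotonic if for every finite sequence $(x_1,y_1),\dots,(x_n,y_n)\in A$, with $y_{n+1}=y_1$, $\sum_i d(x_i,y_{i+1})\ge\sum_i d(x_i,y_i)$. $M$ has the 2-Lip-LTP if for every finite cyclically monotonic $A\subseteq\widetilde M$ and every $\varepsilon>0$ there exist $f,g\in B_{\mathrm{Lip}_0(M)}$ and $u,v\in M$ with $u\ne v$ such that $f(m_{x,y})\ge1-\varepsilon$ and $g(m_{x,y})\ge1-\varepsilon$ for all $(x,y)\in A$, and $\max\{f(x)-f(y),g(y)-g(x)\}+(1-\varepsilon)d(u,v)\le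 d(x,u)+d(y,v)$ for all $x,y\in\pi(A)$. *)

(* Defs.v *)
From HB Require Import structures.
From mathcomp Require Import all_boot all_order all_algebra.
From mathcomp Require Import boolp classical_sets cardinality reals constructive_ereal ereal.
From Stdlib Require Lists.List.
Set Implicit Arguments. Unset Strict Implicit. Unset Printing Implicit Defensive.
Import Order.TTheory GRing.Theory Num.Theory.
Local Open Scope ring_scope.
Local Open Scope classical_set_scope.

Section Defs.
Variable R : realType.
Variable M : Type.
Variable d : M -> M -> R.

Definition is_metric : Prop :=
  (forall x y, 0 <= d x y) /\ (forall x y, d x y = 0 <-> x = y) /\
  (forall x y, d x y = d y x) /\ (forall x y z, d x z <= d x y + d y z).

(* best Lipschitz constant (+oo if not Lipschitz) *)
Definition lipnorm (f : M -> R) : \bar R :=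
  ereal_sup [set r | exists x y : M, x <> y /\ r = (`|f x - f y| / d x y)%:E].

Definition lip0 (x0 : M) (f : M -> R) : Prop :=
  f x0 = 0 /\ (lipnorm f < +oo)%E.

Definition lipball (x0 : M) : set (M -> R) :=
  [set f | lip0 x0 f /\ (lipnorm f <= 1%:E)%E].

(* finite linear combination  sum_i a_i delta_{x_i}  acting on f *)
Definition eval_comb (c : seq (R * M)) (f : M -> R) : R :=
  \sum_(p <- c) p.1 * f p.2.

Definition dualnorm (x0 : M) (phi : (M -> R) -> R) : \bar R :=
  ereal_sup [set (`|phi f|)%:E | f in lipball x0].

(* phi is (the action on Lip_0(M) of) an element of the Lipschitz-free space F(M):
   a linear functional on Lip_0(M) lying in the norm-closed span of the point
   evaluations in Lip_0(M)^* *)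
Definition in_free (x0 : M) (phi : (M -> R) -> R) : Prop :=
  (forall (a : R) (f g : M -> R), lip0 x0 f -> lip0 x0 g ->
     phi (fun x => a * f x + g x) = a * phi f + phi g) /\
  (forall e : R, 0 < e -> exists c : seq (R * M),
     (dualnorm x0 (fun f => (phi f - eval_comb c f)%R) <= e%:E)%E).

Definition wslice (x0 : M) (phi : (M -> R) -> R) (alpha : R) : set (M -> R) :=
  [set f | lipball x0 f /\ 1 - alpha < phi f].

Definition lipdiam (S : set (M -> R)) : \bar R :=
  ereal_sup [set r | exists f g, S f /\ S g /\ r = lipnorm (fun x => f x - g x)].

Definition wLD2P (x0 : M) : Prop :=
  forall phi : (M -> R) -> R, in_free x0 phi -> dualnorm x0 phi = 1%:E ->
  forall alpha : R, 0 < alpha -> lipdiam (wslice x0 phi alpha) = 2%:E.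

(* f(m_{x,y}) *)
Definition mol (f : M -> R) (x y : M) : R := (f x - f y) / d x y.

Definition seq_in (A : set (M * M)) (s : seq (M * M)) : Prop :=
  forall p, Stdlib.Lists.List.In p s -> A p.

Definition cyc_monotonic (A : set (M * M)) : Prop :=
  forall s : seq (M * M), seq_in A s ->
    \sum_(p <- zip (map fst s) (rot 1 (map snd s))) d p.1 p.2 >=
    \sum_(p <- s) d p.1 p.2.

Definition proj_pairs (A : set (M * M)) : set M :=
  [set x | exists y, A (x, y) \/ A (y, x)].

Definition two_LipLTP (x0 : M) : Prop :=
  forall A : set (M * M), finite_set A -> (forall x y, A (x, y) -> x <> y) ->
  cyc_monotonic A ->
  forall eps : R, 0 < eps ->
  exists f g : M -> R, lipball x0 f /\ lipball x0 g /\
  exists u v : M, u <> v /\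
    (forall x y, A (x, y) -> 1 - eps <= mol f x y /\ 1 - eps <= mol g x y) /\
    (forall x y, proj_pairs A x -> proj_pairs A y ->
       Num.max (f x - f y) (g y - g x) + (1 - eps) * d u v <= d x u + d y v).

End Defs.

(* Main.v *)
Require Import Defs.
From HB Require Import structures.
From mathcomp Require Import all_boot all_order all_algebra.
From mathcomp Require Import boolp classical_sets cardinality reals constructive_ereal ereal.
From mathcomp Require Import topology normedtype derive.
From mathcomp Require Import ring lra.
Import Order.TTheory GRing.Theory Num.Theory.
Import numFieldNormedType.Exports.
Set Implicit Arguments. Unset Strict Implicit. Unset Printing Implicit Defensive.
Local Open Scope ring_scope.
Local Open Scope classical_set_scope.


Section Basic.
Variables (R : realType) (M : Type) (d : M -> M -> R) (x0 : M).
Hypothesis hd : is_metric d.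

Lemma d_ge0 x y : 0 <= d x y. Proof. by case: hd => h _; exact: h. Qed.
Lemma d_xx x : d x x = 0. Proof. by case: hd => _ [h _]; apply/h. Qed.
Lemma d_sym x y : d x y = d y x. Proof. by case: hd => _ [_ [h _]]; exact: h. Qed.
Lemma d_tri x y z : d x z <= d x y + d y z. Proof. by case: hd => _ [_ [_ h]]; exact: h. Qed.
Lemma d_gt0 x y : x <> y -> 0 < d x y.
Proof.
move=> xy; rewrite lt_neqAle d_ge0 andbT; apply/eqP => h.
by case: hd => _ [h2 _]; apply: xy; apply/h2.
Qed.

Definition lip1 (f : M -> R) := forall x y, f x - f y <= d x y.

Lemma lip1_abs f : lip1 f -> forall x y, `|f x - f y| <= d x y.
Proof.
move=> hf x y; rewrite ler_norml hf andbT lerNl opprB d_sym; exact: hf.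
Qed.

Lemma lipnorm_ub f x y : x <> y -> ((`|f x - f y| / d x y)%:E <= lipnorm d f)%E.
Proof. by move=> xy; apply: ereal_sup_ubound; exists x, y. Qed.

Lemma ball_lip1 f : lipball d x0 f -> lip1 f.
Proof.
move=> [_ hf] x y.
have [->|xy] := pselect (x = y); first by rewrite subrr d_xx.
have := le_trans (@lipnorm_ub f x y xy) hf; rewrite lee_fin.
rewrite ler_pdivrMr ?d_gt0 // mul1r => h.
exact: le_trans (ler_norm _) h.
Qed.

Lemma lip1_norm f : lip1 f -> (lipnorm d f <= 1%:E)%E.
Proof.
move=> hf; apply: ge_ereal_sup => _ [x [y [xy ->]]].
by rewrite lee_fin ler_pdivrMr ?d_gt0 // mul1r; apply: lip1_abs.
Qed.

Lemma lip1_ball f : f x0 = 0 -> lip1 f -> lipball d x0 f.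
Proof.
move=> f0 hf; have h := lip1_norm hf; split => //; split => //.
exact: le_lt_trans h (ltry _).
Qed.

Lemma lip1_shift f : lip1 f -> lipball d x0 (fun x => f x - f x0).
Proof.
move=> hf; apply: lip1_ball; first by rewrite subrr.
by move=> x y; rewrite opprB addrA subrK; exact: hf.
Qed.

Lemma ball_mol f x y : lipball d x0 f -> x <> y -> mol d f x y <= 1.
Proof.
move=> /ball_lip1 hf xy; rewrite /mol ler_pdivrMr ?d_gt0 // mul1r; exact: hf.
Qed.

Definition mcs (I : Type) (S : set I) (p : I -> M) (f : I -> R) (z : M) : R :=
  inf [set f i + d (p i) z | i in S].

Section McShane.
Variables (I : Type) (S : set I) (p : I -> M) (f : I -> R) (i1 : I).
Hypothesis Si1 : S i1.
Hypothesis hL : forall i j, S i -> S j -> f i - f j <= d (p i) (p j).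

Lemma mcs_lbound z : has_lbound [set f i + d (p i) z | i in S].
Proof.
exists (f i1 - d (p i1) z) => _ [i Si <-].
have h1 := hL Si1 Si; have h2 := d_tri (p i1) z (p i).
rewrite (d_sym z) in h2; lra.
Qed.

Lemma mcs_le z i : S i -> mcs S p f z <= f i + d (p i) z.
Proof. by move=> Si; apply: (ge_inf (mcs_lbound z)); exists i. Qed.

Lemma mcs_ge z B : (forall i, S i -> B <= f i + d (p i) z) -> B <= mcs S p f z.
Proof.
move=> h; apply: lb_le_inf; first by exists (f i1 + d (p i1) z); exists i1.
by move=> _ [i Si <-]; exact: h.
Qed.

Lemma mcs_eq i : S i -> mcs S p f (p i) = f i.
Proof.
move=> Si; apply/le_anti/andP; split.
  by have := mcs_le (p i) Si; rewrite d_xx addr0.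
apply: mcs_ge => j Sj; have := hL Si Sj; rewrite (d_sym (p j)); lra.
Qed.

Lemma mcs_lip1 : lip1 (mcs S p f).
Proof.
move=> z w; suff h : mcs S p f z - d z w <= mcs S p f w by lra.
apply: mcs_ge => i Si.
have h1 := mcs_le z Si; have h2 := d_tri (p i) w z; rewrite (d_sym w z) in h2; lra.
Qed.
End McShane.

Definition mcsl (I : Type) (S : set I) (p : I -> M) (f : I -> R) (z : M) : R :=
  - mcs S p (fun i => - f i) z.

Section McShaneL.
Variables (I : Type) (S : set I) (p : I -> M) (f : I -> R) (i1 : I).
Hypothesis Si1 : S i1.
Hypothesis hL : forall i j, S i -> S j -> f i - f j <= d (p i) (p j).

Let hL' : forall i j, S i -> S j -> - f i - - f j <= d (p i) (p j).
Proof. by move=> i j Si Sj; rewrite opprK addrC d_sym; exact: hL. Qed.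

Lemma mcsl_le z B : (forall i, S i -> f i - d (p i) z <= B) -> mcsl S p f z <= B.
Proof.
move=> h; rewrite /mcsl lerNl; apply: (mcs_ge Si1) => i Si.
by have := h i Si; lra.
Qed.

Lemma mcsl_eq i : S i -> mcsl S p f (p i) = f i.
Proof. by move=> Si; rewrite /mcsl (mcs_eq Si1 hL' Si) opprK. Qed.

Lemma mcsl_lip1 : lip1 (mcsl S p f).
Proof.
move=> z w; rewrite /mcsl; have := mcs_lip1 Si1 hL' w z; rewrite d_sym; lra.
Qed.
End McShaneL.

End Basic.


Section Chains.
Variables (R : realType) (M : Type) (d : M -> M -> R) (x0 : M).
Hypothesis hd : is_metric d.

Fixpoint kc (a : M) (c : seq (M * M)) : R * M :=
  match c with
  | [::] => (0, a)
  | p :: c' => ((kc a c').1 + d (kc a c').2 p.1 - d p.1 p.2, p.2)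
  end.

Lemma kc_ident a p c' y0 :
  (kc a (p :: c')).1 + \sum_(q <- p :: c') d q.1 q.2 =
  d a (last p c').1 + \sum_(q <- zip (map fst (p :: c')) (rcons (map snd c') y0)) d q.1 q.2
   - d (last p c').1 y0.
Proof.
elim: c' p => [|q c'' IH] p.
  by rewrite /= !big_cons !big_nil /=; ring.
have -> : zip (map fst [:: p, q & c'']) (rcons (map snd (q :: c'')) y0) =
   (p.1, q.2) :: zip (map fst (q :: c'')) (rcons (map snd c'') y0) by [].
rewrite big_cons /= big_cons.
have := IH q; rewrite /= => IHq; rewrite big_cons in IHq.
rewrite (d_sym hd q.2 p.1); move: IHq; rewrite big_cons; lra.
Qed.

Lemma kc_lb A a (hA : cyc_monotonic d A) c z : seq_in A c ->
  - d a z <= (kc a c).1 + d (kc a c).2 z.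
Proof.
case: c => [|p c'] hc.
  by rewrite /= add0r; have := d_ge0 hd a z; lra.
have h := hA _ hc.
rewrite [map snd _]/= rot1_cons in h.
have hi := kc_ident a p c' p.2.
have -> : (kc a (p :: c')).2 = p.2 by [].
have t1 := d_tri hd (last p c').1 z p.2. rewrite (d_sym hd z p.2) in t1.
have t2 := d_tri hd (last p c').1 a z.
rewrite (d_sym hd _ a) in t2.
move: h hi; set S1 := \sum_(_ <- _ :: _) _; set Z := \sum_(_ <- zip _ _) _ => h hi; set K := (kc a (p :: c')).1 in hi *. clearbody K S1 Z; lra.
Qed.

Definition pot (A : set (M * M)) (a z : M) : R :=
  inf [set (kc a c).1 + d (kc a c).2 z | c in seq_in A].

Section Pot.
Variables (A : set (M * M)) (a : M).
Hypothesis hA : cyc_monotonic d A.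

Lemma seq_in_nil : seq_in A [::]. Proof. by move=> p []. Qed.

Lemma pot_le c z : seq_in A c -> pot A a z <= (kc a c).1 + d (kc a c).2 z.
Proof.
move=> hc.
have hlb : has_lbound [set (kc a c).1 + d (kc a c).2 z | c in seq_in A].
  by exists (- d a z) => _ [c' hc' <-]; exact: (kc_lb a hA).
by apply: (ge_inf hlb); exists c.
Qed.

Lemma pot_ge z B : (forall c, seq_in A c -> B <= (kc a c).1 + d (kc a c).2 z) ->
  B <= pot A a z.
Proof.
move=> h; apply: lb_le_inf; first by exists ((kc a [::]).1 + d (kc a [::]).2 z); exists [::] => //; exact: seq_in_nil.
by move=> _ [c hc <-]; exact: h.
Qed.

Lemma pot_lip1 : lip1 d (pot A a).
Proof.
move=> z w; suff h : pot A a z - d z w <= pot A a w by lra.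
apply: pot_ge => c hc; have h1 := pot_le z hc.
have h2 := d_tri hd (kc a c).2 w z; rewrite (d_sym hd w z) in h2; lra.
Qed.

Lemma pot_pair x y : A (x, y) -> pot A a y + d x y <= pot A a x.
Proof.
move=> hxy; apply: pot_ge => c hc.
have hc' : seq_in A ((x, y) :: c) by move=> p [<-|hp] //; exact: hc.
have := pot_le y hc'; rewrite /= d_xx //.
set K := (kc a c).1; set e := (kc a c).2; clearbody K e; lra.
Qed.
End Pot.

End Chains.


Section Sums.
Variable R : realType.

Lemma sum_le_mem (T : eqType) (s : seq T) (F : T -> R) p : p \in s ->
  (forall q, q \in s -> F q <= 0) -> \sum_(q <- s) F q <= F p.
Proof.
elim: s => // a s IH; rewrite in_cons => /orP [/eqP -> | hp] hF; rewrite big_cons.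
  have : \sum_(q <- s) F q <= 0.
    by rewrite big_seq; apply: sumr_le0 => q hq; apply: hF; rewrite in_cons hq orbT.
  set S := \sum_(q <- s) F q; clearbody S; lra.
have h1 : F a <= 0 by apply: hF; rewrite in_cons eqxx.
have h2 := IH hp (fun q hq => hF q (@mem_behead _ (a :: s) _ hq)).
set S := \sum_(q <- s) F q in h2 *; clearbody S; lra.
Qed.

Lemma sum_one (T : Type) (s : seq T) : \sum_(q <- s) (1 : R) = (size s)%:R.
Proof. by elim: s => [|a s IH]; rewrite ?big_nil // big_cons IH /= mulrS. Qed.

Lemma sum_abs_le (T : eqType) (s : seq T) (F : T -> R) :
  (forall q, q \in s -> `|F q| <= 1) -> `|\sum_(q <- s) F q| <= (size s)%:R.
Proof.
elim: s => [|a s IH] h; first by rewrite big_nil normr0.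
rewrite big_cons /= mulrS.
have h1 : `|F a| <= 1 by apply: h; rewrite in_cons eqxx.
have h2 := IH (fun q hq => h q (@mem_behead _ (a :: s) _ hq)).
apply: le_trans (ler_normD _ _) _; exact: lerD.
Qed.
End Sums.

Section Dir1.
Variables (R : realType) (M : Type) (d : M -> M -> R) (x0 : M).
Hypothesis hd : is_metric d.
Hypothesis hM : exists x y : M, x <> y.

Lemma lip1_zero : lipball d x0 (fun=> 0).
Proof. by apply: lip1_ball => // x y; rewrite subrr; exact: d_ge0. Qed.

Lemma dir1 : wLD2P d x0 -> two_LipLTP d x0.
Proof.
move=> hW A Afin Adiag hA eps eps0.
have [s hs] : exists s : seq {classic (M * M)}, A = [set` s] :=
  (@finite_seqP {classic (M * M)} A).1 Afin.
have [u0 [v0 uv0]] := hM.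
have [s0|sn0] := eqVneq s [::].
  exists (fun=> 0), (fun=> 0); split; first exact: lip1_zero.
  split; first exact: lip1_zero.
  exists u0, v0; split => //; split.
    by move=> x y; rewrite hs s0.
  by move=> x y [y' []]; rewrite hs s0.
have n0 : 0 < (size s)%:R :> R by rewrite ltr0n lt0n size_eq0.
set n := (size s)%:R : R.
have hsA : forall p, p \in s -> A p by move=> p hp; rewrite hs.
have hAs : forall x y, A (x, y) -> (x, y) \in (s : seq {classic (M * M)}).
  by move=> x y; rewrite hs.
have hdiag : forall p, p \in s -> p.1 <> p.2.
  by move=> [x y] hp; apply: Adiag; exact: hsA.
pose mu := fun f : M -> R => n^-1 * \sum_(p <- s) mol d f p.1 p.2.
pose f0 := fun z => pot d A x0 z - pot d A x0 x0.
have hf0 : lipball d x0 f0 := lip1_shift x0 hd (pot_lip1 hd x0 hA).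
have hmol0 : forall p, p \in s -> mol d f0 p.1 p.2 = 1.
  move=> [x y] hp; apply/le_anti/andP; split.
    apply: (ball_mol hd hf0); exact: (hdiag _ hp).
  have dpos := d_gt0 hd (hdiag _ hp).
  rewrite /mol ler_pdivlMr //= mul1r /f0.
  have := pot_pair hd x0 hA (hsA _ hp); lra.
have hmu0 : mu f0 = 1.
  by rewrite /mu (eq_big_seq (fun=> 1)) ?sum_one ?mulVf ?gt_eqF //; move=> p /hmol0.
have hfree : in_free d x0 mu.
  split.
    move=> a f g _ _; rewrite /mu.
    rewrite (eq_bigr (fun p => a * mol d f p.1 p.2 + mol d g p.1 p.2)); last first.
      by move=> p _; rewrite /mol; ring.
    by rewrite big_split /= -mulr_sumr; ring.
  move=> e e0.
  exists ([seq (n^-1 / d p.1 p.2, p.1) | p <- s] ++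
          [seq (- (n^-1 / d p.1 p.2), p.2) | p <- s]).
  have hev : forall f, eval_comb ([seq (n^-1 / d p.1 p.2, p.1) | p <- s] ++
          [seq (- (n^-1 / d p.1 p.2), p.2) | p <- s]) f = mu f.
    move=> f; rewrite /eval_comb big_cat !big_map /= -big_split /= /mu mulr_sumr.
    by apply: eq_bigr => p _; rewrite /mol; ring.
  apply: ge_ereal_sup => _ [f _ <-]; rewrite hev subrr normr0 lee_fin; exact: ltW.
have hnorm : dualnorm d x0 mu = 1%:E.
  apply/le_anti/andP; split.
    apply: ge_ereal_sup => _ [f hf <-]; rewrite lee_fin /mu normrM.
    rewrite ger0_norm ?invr_ge0 ?(ltW n0) // -(mulVf (lt0r_neq0 n0)) ler_pM2l ?invr_gt0 //.
    apply: sum_abs_le => p hp.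
    have dpos := d_gt0 hd (hdiag _ hp).
    rewrite /mol normrM normfV (gtr0_norm dpos) ler_pdivrMr // mul1r.
    have := lip1_abs hd (ball_lip1 hd hf); apply.
  apply: ereal_sup_ubound; exists f0 => //; by rewrite hmu0 normr1.
pose al := eps / n.
have al0 : 0 < al by exact: divr_gt0.
have hal : al * n = eps by rewrite /al divfK ?lt0r_neq0.
have hale : al <= eps.
  rewrite /al ler_pdivrMr //.
  have : 1 <= n by rewrite /n ler1n lt0n size_eq0.
  clearbody n; nra.
have hdiam := hW mu hfree hnorm al al0.
have : ((2 - al)%:E < lipdiam d (wslice d x0 mu al))%E by rewrite hdiam lte_fin; lra.
move=> /ereal_sup_gt [_ [F [G [hF [hG ->]]]] /ereal_sup_gt [_ [u [v [uv ->]]]]].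
rewrite lte_fin => huv.
have duv := d_gt0 hd uv.
move: huv; rewrite ltr_pdivlMr // /= => huv.
have [u' [v' [uv' huv']]] : exists u' v', u' <> v' /\
    (2 - al) * d u' v' < (F v' - G v') - (F u' - G u').
  have [h|h] := lerP 0 (F u - G u - (F v - G v)).
    exists v, u; split; first by move=> e; apply: uv.
    by rewrite (d_sym hd v u); move: huv; rewrite ger0_norm.
  exists u, v; split => //.
  by move: huv; rewrite ltr0_norm // opprB.
have lF := ball_lip1 hd hF.1; have lG := ball_lip1 hd hG.1.
have hmolF : forall H, wslice d x0 mu al H -> forall p, p \in s -> 1 - eps <= mol d H p.1 p.2.
  move=> H [hH hmu] p hp.
  have hle : forall q, q \in s -> mol d H q.1 q.2 - 1 <= 0.
    by move=> q hq; rewrite subr_le0; apply: (ball_mol hd hH); exact: hdiag _ hq.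
  have h1 := sum_le_mem hp hle.
  rewrite big_split /= sumrN sum_one -/n in h1.
  move: hmu; rewrite /mu mulrC -/(_ / _) ltr_pdivlMr //.
  set S := \sum_(q <- s) _ in h1 *; clearbody S => hmu.
  have : (1 - al) * n = n - eps by rewrite mulrBl mul1r hal.
  lra.
exists F, G; split; first exact: hF.1.
split; first exact: hG.1.
exists u', v'; split => //; split.
  move=> x y hxy; split; [exact: (hmolF F hF (x, y) (hAs _ _ hxy))|exact: (hmolF G hG (x, y) (hAs _ _ hxy))].
move=> x y _ _.
have l1 := lF v' u'; have l2 := lG u' v'.
have l3 := lF x u'; have l4 := lF v' y; have l5 := lG y v'; have l6 := lG u' x.
have dd := d_ge0 hd u' v'.
rewrite (d_sym hd v' u') in l1; rewrite (d_sym hd v' y) in l4; rewrite (d_sym hd u' x) in l6.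
have hm : al * d u' v' <= eps * d u' v' by exact: ler_wpM2r.
rewrite -lerBrDr ge_max; apply/andP; split; nra.
Qed.

End Dir1.


Section Aux.
Variables (R : realType) (M : Type) (d : M -> M -> R) (x0 : M).
Hypothesis hd : is_metric d.

Lemma eval_lin (c : seq (R * M)) (a b : R) (f g : M -> R) :
  eval_comb c (fun z => a * f z + b * g z) = a * eval_comb c f + b * eval_comb c g.
Proof.
rewrite /eval_comb (eq_bigr (fun p => a * (p.1 * f p.2) + b * (p.1 * g p.2))); last first.
  by move=> p _; ring.
by rewrite big_split /= -!mulr_sumr.
Qed.

Lemma eval_opp (c : seq (R * M)) (f : M -> R) :
  eval_comb c (fun z => - f z) = - eval_comb c f.
Proof.
rewrite /eval_comb -sumrN; apply: eq_bigr => p _; ring.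
Qed.

Lemma eval_idx (c : seq (R * M)) (f : M -> R) : eval_comb c f =
  \sum_(i < (size c).+1) nth 0 (0 :: map fst c) i * f (nth x0 (x0 :: map snd c) i).
Proof.
rewrite big_ord_recl /= mul0r add0r /eval_comb (big_nth (0, x0)) big_mkord.
apply: eq_bigr => i _.
by rewrite add0n (nth_map (0, x0)) ?(nth_map (0, x0)) //.
Qed.

Lemma exists_pos_lb (I : finType) (P : I -> Prop) (g : I -> R) :
  (forall i, P i -> 0 < g i) -> exists t, 0 < t /\ forall i, P i -> t <= g i.
Proof.
move=> hg.
suff : forall s : seq I, exists t, 0 < t /\ forall i, i \in s -> P i -> t <= g i.
  by case/(_ (enum I)) => t [t0 ht]; exists t; split => // i; apply: ht; rewrite mem_enum.
elim => [|a s [t [t0 ht]]]; first by exists 1.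
have [Pa|nPa] := pselect (P a).
  exists (Num.min t (g a)); split; first by rewrite lt_min t0 hg.
  move=> i; rewrite in_cons => /orP [/eqP ->|hi] Pi; first by rewrite ge_min lexx orbT.
  by rewrite ge_min ht.
exists t; split => // i; rewrite in_cons => /orP [/eqP ->|hi] Pi //; exact: ht.
Qed.

Lemma sum_inE (T : Type) (s : seq T) (F G : T -> R) :
  (forall q, List.In q s -> F q = G q) -> \sum_(q <- s) F q = \sum_(q <- s) G q.
Proof.
elim: s => [|a s IH] h; first by rewrite !big_nil.
rewrite !big_cons h /=; last by left.
by rewrite IH // => q hq; apply: h; right.
Qed.

Lemma sum_zip (u w : seq M) (h : M -> R) : size u = size w ->
  \sum_(p <- zip u w) (h p.1 - h p.2) = \sum_(x <- u) h x - \sum_(y <- w) h y.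
Proof.
elim: u w => [|a u IH] [|b w] //= hs; first by rewrite !big_nil subrr.
rewrite !big_cons IH; last by case: hs.
set S1 := \sum_(x <- u) h x; set S2 := \sum_(y <- w) h y; clearbody S1 S2; ring.
Qed.

Lemma sum_rot (T : Type) (w : seq T) (F : T -> R) :
  \sum_(x <- rot 1 w) F x = \sum_(x <- w) F x.
Proof. by rewrite /rot big_cat /= addrC -big_cat /= cat_take_drop. Qed.

Lemma cm_of_lip (A : set (M * M)) (h : M -> R) : lip1 d h ->
  (forall x y, A (x, y) -> h x - h y = d x y) -> cyc_monotonic d A.
Proof.
move=> hl ht s hs.
apply: le_trans (_ : \sum_(p <- zip (map fst s) (rot 1 (map snd s))) (h p.1 - h p.2) <= _).
  rewrite sum_zip ?size_rot ?size_map // sum_rot !big_map -sumrB.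
  rewrite (@sum_inE _ s (fun p => h p.1 - h p.2) (fun p => d p.1 p.2)) //.
  by move=> -[x y] hq; apply: ht; exact: hs.
by apply: ler_sum => p _; exact: hl.
Qed.

End Aux.


Lemma sum_cont (R : realType) m (L : 'I_m -> R) (r : seq 'I_m) :
  continuous (fun v : 'rV[R]_m => \sum_(i <- r) L i * v ord0 i).
Proof.
elim: r => [|a r IH].
  move=> v; rewrite (_ : (fun _ => _) = fun=> 0); first exact: cst_continuous.
  by apply/funext => w; rewrite big_nil.
move=> v.
rewrite (_ : (fun _ => _) = (fun w : 'rV[R]_m => L a * w ord0 a + \sum_(i <- r) L i * w ord0 i)); last first.
  by apply/funext => w; rewrite big_cons.
have h1 : {for v, continuous (fun w : 'rV[R]_m => L a * w ord0 a)}.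
  apply: continuousM; first exact: cst_continuous.
  exact: coord_continuous.
exact: (continuousD h1 (IH v)).
Qed.

Lemma exists_max (R : realType) (m : nat) (D : 'I_m.+1 -> 'I_m.+1 -> R)
  (hD : forall i j, 0 <= D i j) (L : 'I_m.+1 -> R) :
  exists k : 'I_m.+1 -> R, k ord0 = 0 /\ (forall i j, k i - k j <= D i j) /\
    forall k' : 'I_m.+1 -> R, k' ord0 = 0 -> (forall i j, k' i - k' j <= D i j) ->
      \sum_i L i * k' i <= \sum_i L i * k i.
Proof.
pose K := [set v : 'rV[R]_m.+1 | v ord0 ord0 = 0 /\
   forall i j, v ord0 i - v ord0 j <= D i j].
have K0 : K !=set0.
  exists 0; split; first by rewrite mxE.
  by move=> i j; rewrite !mxE subrr.
have Kcl : closed K.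
  have -> : K = [set v : 'rV[R]_m.+1 | v ord0 ord0 = 0] `&`
     \bigcap_(ij in [set: 'I_m.+1 * 'I_m.+1])
        [set v : 'rV[R]_m.+1 | v ord0 ij.1 - v ord0 ij.2 <= D ij.1 ij.2].
    apply/seteqP; split => v /=.
      by move=> [h1 h2]; split => // [[i j]] _; exact: h2.
    by move=> [h1 h2]; split => // i j; exact: (h2 (i, j)).
  apply: closedI.
    apply: (@preimage_closed _ _ (fun v : 'rV[R]_m.+1 => v ord0 ord0) [set x | x = 0]).
      by move=> x _; exact: coord_continuous.
    exact: closed_eq.
  apply: closed_bigI => [[i j]] _.
  apply: (@preimage_closed _ _ (fun v : 'rV[R]_m.+1 => v ord0 i - v ord0 j) [set x | x <= D i j]).
    move=> x _; apply: continuousB; exact: coord_continuous.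
  exact: closed_le.
have Kco : compact K.
  have Bco : compact [set v : 'rV[R]_m.+1 | forall i, `[- D ord0 i, D i ord0]%classic (v ord0 i)].
    apply: (@rV_compact _ _ (fun i => `[- D ord0 i, D i ord0]%classic)).
    by move=> i; apply: segment_compact.
  apply: (subclosed_compact Kcl Bco).
  move=> v [h0 h] i /=; rewrite in_itv /=.
  have := h i ord0; have := h ord0 i; rewrite h0 sub0r subr0 => a b.
  by rewrite b andbT lerNl.
have [c cK cmax] := EVT_max_rV K0 Kco (continuous_subspaceT (@sum_cont _ _ L (index_enum _))).
move: cK; rewrite inE => -[c0 cL].
exists (fun i => c ord0 i); split => //; split => // k' k0 kL.
have := cmax (\row_i k' i); rewrite !inE; under eq_bigr do rewrite mxE.
apply; split; first by rewrite mxE.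
by move=> i j; rewrite !mxE.
Qed.


Section Dir2.
Variables (R : realType) (M : Type) (d : M -> M -> R) (x0 : M).
Hypothesis hd : is_metric d.

Lemma ball_opp f : lipball d x0 f -> lipball d x0 (fun z => - f z).
Proof.
move=> hf; have l := ball_lip1 hd hf; apply: lip1_ball => //.
  by rewrite hf.1.1 oppr0.
by move=> x y; rewrite opprK addrC (d_sym hd); exact: l.
Qed.

Lemma dir2_main (hL : two_LipLTP d x0) (phi : (M -> R) -> R)
  (hfree : in_free d x0 phi) (hnorm : dualnorm d x0 phi = 1%:E)
  (al e : R) (al0 : 0 < al) (e0 : 0 < e) (e1 : 2 * e < 1) (ea : 4 * e < al) :
  exists F G, wslice d x0 phi al F /\ wslice d x0 phi al G /\
    ((2 - 2 * e)%:E <= lipnorm d (fun z => (F z - G z)%R))%E.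
Proof.
have [c hc] := hfree.2 e e0.
have happ : forall f, lipball d x0 f -> `|phi f - eval_comb c f| <= e.
  move=> f hf; rewrite -lee_fin; apply: le_trans hc.
  by apply: ereal_sup_ubound; exists f.
have [f2 [hf2 hc2]] : exists f2, lipball d x0 f2 /\ 1 - 2 * e < eval_comb c f2.
  have : ((1 - e)%:E < dualnorm d x0 phi)%E by rewrite hnorm lte_fin; lra.
  move=> /ereal_sup_gt [_ [f1 hf1 <-]]; rewrite lte_fin => h1.
  have h2 := happ f1 hf1.
  have [hp|hn] := lerP 0 (eval_comb c f1).
    exists f1; split => //.
    move: h1 h2 hp; set a := phi f1; set b := eval_comb c f1 => h1 h2 hp.
    clearbody a b; have := ler_normD (a - b) b.
    rewrite subrK (ger0_norm hp); lra.
  exists (fun z => - f1 z); split; first exact: ball_opp.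
  rewrite eval_opp.
  move: h1 h2 hn; set a := phi f1; set b := eval_comb c f1 => h1 h2 hn.
  clearbody a b; have := ler_normD (a - b) b; rewrite subrK (ltr0_norm hn); lra.
pose m := size c.
pose pt := fun i : 'I_m.+1 => nth x0 (x0 :: map snd c) i.
pose L := fun i : 'I_m.+1 => nth 0 (0 :: map fst c) i.
have hpt0 : pt ord0 = x0 by [].
have [k [k0 [kL kmax]]] := exists_max (fun i j => d_ge0 hd (pt i) (pt j)) L.
pose Kf := mcs d setT pt k.
have kL' : forall i j, setT i -> setT j -> k i - k j <= d (pt i) (pt j) by move=> i j _ _; exact: kL.
have hKf : forall i, Kf (pt i) = k i.
  by move=> i; apply: (mcs_eq hd (i1 := ord0)).
have lKf : lip1 d Kf by exact: (mcs_lip1 hd (i1 := ord0)).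
have hev : forall f, eval_comb c f = \sum_i L i * f (pt i) by move=> f; exact: eval_idx.
pose N := eval_comb c Kf.
have hN : N = \sum_i L i * k i by rewrite /N hev; apply: eq_bigr => i _; rewrite hKf.
have hmax : forall g, lip1 d g -> g x0 = 0 -> eval_comb c g <= N.
  move=> g lg g0; rewrite hN hev; apply: kmax => [|i j]; [exact: g0|exact: lg].
have hN2 : 1 - 2 * e < N.
  by apply: lt_le_trans hc2 _; apply: hmax; [exact: (ball_lip1 hd hf2)|exact: hf2.1.1].
pose A := [set q : M * M | exists i j, q = (pt i, pt j) /\ pt i <> pt j /\
   Kf (pt i) - Kf (pt j) = d (pt i) (pt j)].
have Afin : finite_set A.
  apply: (@sub_finite_set _ _ ((fun ij : 'I_m.+1 * 'I_m.+1 => (pt ij.1, pt ij.2)) @` setT)).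
    by move=> _ [i [j [-> _]]]; exists (i, j).
  by apply: finite_image; exact: finite_finset.
have Adiag : forall x y, A (x, y) -> x <> y.
  by move=> x y [i [j [[-> ->] [h _]]]].
have Acm : cyc_monotonic d A.
  apply: (cm_of_lip lKf) => x y [i [j [[-> ->] [_ h]]]]; exact: h.
have claim : forall F, lipball d x0 F -> (forall x y, A (x, y) -> 1 - e <= mol d F x y) ->
    (1 - e) * N <= eval_comb c F.
  move=> F hF hmolF.
  have lF := ball_lip1 hd hF.
  pose P := fun ij : 'I_m.+1 * 'I_m.+1 => pt ij.1 <> pt ij.2 /\
     Kf (pt ij.1) - Kf (pt ij.2) < d (pt ij.1) (pt ij.2).
  pose g := fun ij : 'I_m.+1 * 'I_m.+1 =>
     (d (pt ij.1) (pt ij.2) - (Kf (pt ij.1) - Kf (pt ij.2))) / (2 * d (pt ij.1) (pt ij.2) + 1).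
  have [t [t0 ht]] : exists t, 0 < t /\ forall ij, P ij -> t <= g ij.
    apply: exists_pos_lb => -[i j] [_ h] /=; rewrite /g /=.
    have := d_ge0 hd (pt i) (pt j).
    set X := Kf (pt i) - Kf (pt j) in h *; set D := d (pt i) (pt j) in h *.
    move=> D0; apply: divr_gt0; lra.
  have q0 : 0 < 1 + t * e by have := mulr_gt0 t0 e0; lra.
  pose H := fun z => ((1 + t) / (1 + t * e)) * Kf z + (- (t / (1 + t * e))) * F z.
  have hH : forall i j, H (pt i) - H (pt j) <= d (pt i) (pt j).
    move=> i j.
    suff : (1 + t) * (Kf (pt i) - Kf (pt j)) - t * (F (pt i) - F (pt j)) <=
           (1 + t * e) * d (pt i) (pt j).
      move=> hX; rewrite -(ler_pM2l q0).
      have -> : (1 + t * e) * (H (pt i) - H (pt j)) =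
         (1 + t) * (Kf (pt i) - Kf (pt j)) - t * (F (pt i) - F (pt j)).
        by rewrite /H; field; rewrite lt0r_neq0.
      exact: hX.
    have Xle := lKf (pt i) (pt j).
    have Yge : - (F (pt i) - F (pt j)) <= d (pt i) (pt j).
      by rewrite opprB (d_sym hd (pt i)); exact: lF.
    have [eq|neq] := pselect (pt i = pt j).
      by rewrite eq !subrr d_xx // !mulr0 subrr.
    have dpos := d_gt0 hd neq.
    have [tight|nt] := lerP (d (pt i) (pt j)) (Kf (pt i) - Kf (pt j)).
      have hA : A (pt i, pt j).
        exists i, j; split => //; split => //; apply/le_anti/andP; split => //.
      have := hmolF _ _ hA; rewrite /mol ler_pdivlMr // => hY.
      have hX : Kf (pt i) - Kf (pt j) = d (pt i) (pt j) by apply/le_anti/andP; split.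
      rewrite hX.
      set X := Kf (pt i) - Kf (pt j) in hY Yge hX *; set Y := F (pt i) - F (pt j) in hY Yge *;
      set D := d (pt i) (pt j) in hY Yge hX dpos *.
      clearbody X Y D.
      have h1 : 0 <= t * (Y - (1 - e) * D) by apply: mulr_ge0; lra.
      nra.
    have := ht (i, j) (conj neq nt); rewrite /g /= ler_pdivlMr; last first.
      have := d_ge0 hd (pt i) (pt j); lra.
    set X := Kf (pt i) - Kf (pt j) in nt Xle *; set Y := F (pt i) - F (pt j) in Yge *;
    set D := d (pt i) (pt j) in nt Xle Yge dpos *.
    clearbody X Y D => hT.
    have h1 : 0 <= t * (Y + D) by apply: mulr_ge0; lra.
    have h2 : 0 <= t * (D - X) by apply: mulr_ge0; lra.
    have h3 : 0 <= t * e * D by apply: mulr_ge0; [apply: mulr_ge0|]; lra.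
    nra.
  have hH0 : H (pt ord0) = 0.
    by rewrite /H hKf k0 hpt0 hF.1.1 !mulr0 addr0.
  have := kmax (fun i => H (pt i)) hH0 hH.
  rewrite -hev -hN /H eval_lin => hle.
  have hle2 : (1 + t) * N - t * eval_comb c F <= (1 + t * e) * N.
    rewrite -(ler_pM2l q0) in hle.
    move: hle; set cF := eval_comb c F.
    have -> : (1 + t * e) * ((1 + t) / (1 + t * e) * N + - (t / (1 + t * e)) * cF) =
       (1 + t) * N - t * cF by field; rewrite lt0r_neq0.
    by [].
  have : t * ((1 - e) * N - eval_comb c F) <= 0.
    move: hle2; set cF := eval_comb c F; clearbody cF => hle2.
    have -> : t * ((1 - e) * N - cF) = ((1 + t) * N - t * cF) - (1 + t * e) * N by ring.
    lra.
  rewrite pmulr_rle0 //; lra.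
have [[a b] hab] : exists q, A q.
  apply: contrapT => hn.
  have := claim (fun=> 0) (lip1_zero x0 hd).
  have -> : eval_comb c (fun=> 0) = 0 by rewrite /eval_comb big1 // => p _; rewrite mulr0.
  have hv : forall x y, A (x, y) -> 1 - e <= mol d (fun=> 0) x y.
    by move=> x y hxy; exfalso; apply: hn; exists (x, y).
  move=> /(_ hv).
  have : 0 < (1 - e) * N by apply: mulr_gt0; lra.
  lra.
have [f [g [hf [hg [u [v [uv [hmolfg hineq]]]]]]]] := hL A Afin Adiag Acm e e0.
pose Q := proj_pairs A.
have hQa : Q a by exists b; left.
have lf := ball_lip1 hd hf; have lg := ball_lip1 hd hg.
have hLf : forall i j, Q i -> Q j -> f i - f j <= d (id i) (id j) by move=> i j _ _; exact: lf.
have hLg : forall i j, Q i -> Q j -> g i - g j <= d (id i) (id j) by move=> i j _ _; exact: lg.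
pose F1 := mcs d Q id f.
pose G1 := mcs d Q id g.
have hF1 : forall x, Q x -> F1 x = f x by move=> x Qx; exact: (mcs_eq hd hQa hLf Qx).
have hG1 : forall x, Q x -> G1 x = g x by move=> x Qx; exact: (mcs_eq hd hQa hLg Qx).
have lF1 : lip1 d F1 := mcs_lip1 hd hQa hLf.
have lG1 : lip1 d G1 := mcs_lip1 hd hQa hLg.
pose S1 := Q `|` [set v].
pose S2 := Q `|` [set u].
have S1v : S1 v by right.
have S2u : S2 u by right.
have hLF1 : forall i j, S1 i -> S1 j -> F1 i - F1 j <= d (id i) (id j) by move=> i j _ _; exact: lF1.
have hLG1 : forall i j, S2 i -> S2 j -> G1 i - G1 j <= d (id i) (id j) by move=> i j _ _; exact: lG1.
pose F := mcsl d S1 id F1.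
pose G := mcsl d S2 id G1.
have lF : lip1 d F := mcsl_lip1 hd S1v hLF1.
have lG : lip1 d G := mcsl_lip1 hd S2u hLG1.
have hFQ : forall x, Q x -> F x = f x.
  move=> x Qx; rewrite -hF1 //; exact: (mcsl_eq hd S1v hLF1 (or_introl Qx)).
have hGQ : forall x, Q x -> G x = g x.
  move=> x Qx; rewrite -hG1 //; exact: (mcsl_eq hd S2u hLG1 (or_introl Qx)).
have hFv : F v = F1 v by exact: (mcsl_eq hd S1v hLF1 S1v).
have hGu : G u = G1 u by exact: (mcsl_eq hd S2u hLG1 S2u).
have dd0 : 0 <= e * d u v by apply: mulr_ge0; [lra|exact: d_ge0].
have hFu : F u <= F1 v - (1 - e) * d u v.
  apply: (mcsl_le S1v) => p [Qp|->] /=.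
    rewrite hF1 //.
    suff : f p - d p u + (1 - e) * d u v <= F1 v by lra.
    apply: (mcs_ge hQa) => x Qx /=.
    have := hineq p x Qp Qx.
    have : f p - f x <= Num.max (f p - f x) (g x - g p) by rewrite le_max lexx.
    set mx := Num.max _ _; clearbody mx; lra.
  rewrite (d_sym hd v u); lra.
have hGv : G v <= G1 u - (1 - e) * d u v.
  apply: (mcsl_le S2u) => p [Qp|->] /=.
    rewrite hG1 //.
    suff : g p - d p v + (1 - e) * d u v <= G1 u by lra.
    apply: (mcs_ge hQa) => x Qx /=.
    have := hineq x p Qx Qp.
    have : g p - g x <= Num.max (f x - f p) (g p - g x) by rewrite le_max lexx orbT.
    set mx := Num.max _ _; clearbody mx; lra.
  lra.
pose F' := fun z => F z - F x0.
pose G' := fun z => G z - G x0.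
have hF' : lipball d x0 F' := lip1_shift x0 hd lF.
have hG' : lipball d x0 G' := lip1_shift x0 hd lG.
have hQ : forall x y, A (x, y) -> Q x /\ Q y.
  by move=> x y hxy; split; [exists y; left|exists x; right].
have hslice : forall H, lipball d x0 H -> (forall x y, A (x, y) -> 1 - e <= mol d H x y) ->
    wslice d x0 phi al H.
  move=> H hH hm; split => //.
  have h1 := claim H hH hm.
  have h2 := happ H hH.
  have h3 : (1 - e) * (1 - 2 * e) <= (1 - e) * N.
    by apply: ler_wpM2l; lra.
  move: h1 h2 h3; set cH := eval_comb c H; set pH := phi H; clearbody cH pH => h1 h2 h3.
  have := ler_norml (pH - cH) e; rewrite h2 => /esym/andP [h4 _].
  nra.
exists F', G'; split.
  apply: hslice => // x y hxy; have [Qx Qy] := hQ _ _ hxy.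
  rewrite /mol /F' (_ : F x - F x0 - (F y - F x0) = f x - f y); first exact: (hmolfg x y hxy).1.
  by rewrite (hFQ x Qx) (hFQ y Qy); ring.
split.
  apply: hslice => // x y hxy; have [Qx Qy] := hQ _ _ hxy.
  rewrite /mol /G' (_ : G x - G x0 - (G y - G x0) = g x - g y); first exact: (hmolfg x y hxy).2.
  by rewrite (hGQ x Qx) (hGQ y Qy); ring.
have vu : v <> u by move=> h; apply: uv.
apply: le_trans (lipnorm_ub d _ vu); rewrite lee_fin /=.
have dpos := d_gt0 hd vu.
rewrite ler_pdivlMr //.
apply: le_trans (ler_norm _).
rewrite /F' /G' hFv hGu (d_sym hd v u).
move: hFu hGv; set X := F u; set Y := G v; set Z1 := F1 v; set Z2 := G1 u;
  set D := d u v; clearbody X Y Z1 Z2 D.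
nra.
Qed.

End Dir2.


Lemma dir2 (R : realType) (M : Type) (d : M -> M -> R) (x0 : M) (hd : is_metric d) :
  two_LipLTP d x0 -> wLD2P d x0.
Proof.
move=> hL phi hfree hnorm al al0.
apply/le_anti/andP; split.
  apply: ge_ereal_sup => _ [F [G [hF [hG ->]]]].
  apply: ge_ereal_sup => _ [x [y [xy ->]]].
  have lF := ball_lip1 hd hF.1; have lG := ball_lip1 hd hG.1.
  have dpos := d_gt0 hd xy.
  rewrite lee_fin ler_pdivrMr //.
  have h1 := lip1_abs hd lF x y; have h2 := lip1_abs hd lG x y.
  have := ler_normB (F x - F y) (G x - G y).
  have -> : F x - G x - (F y - G y) = (F x - F y) - (G x - G y) by ring.
  lra.
apply/lee_addgt0Pr => eps eps0.
pose e := Num.min (eps / 4) (Num.min (al / 8) (1 / 4)).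
have e0 : 0 < e by rewrite !lt_min !divr_gt0.
have e1 : e <= eps / 4 by rewrite ge_min lexx.
have e2 : e <= al / 8 by rewrite ge_min; apply/orP; right; rewrite ge_min lexx.
have e3 : e <= 1 / 4 by rewrite ge_min; apply/orP; right; rewrite ge_min lexx orbT.
have [F [G [hF [hG hn]]]] := dir2_main hd hL hfree hnorm al0 e0 (ltac:(lra)) (ltac:(lra)).
have hX : ((2 - 2 * e)%:E <= lipdiam d (wslice d x0 phi al))%E.
  apply: le_trans hn _; apply: ereal_sup_ubound; by exists F, G.
have -> : (2%:E : \bar R) = ((2 - 2 * e)%:E + (2 * e)%:E)%E by rewrite -EFinD; congr (_%:E); ring.
apply: leeD => //; rewrite lee_fin; lra.
Qed.

Unset Implicit Arguments.
Local Close Scope classical_set_scope.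

Theorem proposition4p5 (R : realType) (M : Type) (d : M -> M -> R) (x0 : M)
  (hd : is_metric d) (hM : exists x y : M, x <> y) :
  wLD2P d x0 <-> two_LipLTP d x0.
Proof.
split; [exact: (dir1 hd hM) | exact: (dir2 hd)].
Qed.
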